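(* For every prime $p$ and $d\ge1$, any test for list agreement of $1$-dimensional $2$-assignments on the spherical building $S(p,d)$ (without any locally-differing assumption) must perform at least $2(p-1)$ queries.
   Context: $S(p,d)$: vertices are the nontrivial proper subspaces of $\mathbb F_p^{d+2}$, faces are chains $V_1<\dots<V_j$ of such subspaces. A $1$-dimensional $2$-assignment gives each edge $e$ two functions $L^e_1,L^e_2:e\to\{0,1\}$; it is agreeing if there are $g_1,g_2$ on the vertices and permutations $\pi_e$ of $\{1,2\}$ with $L^e_{\pi_e(i)}=g_i|_e$. A query is an edge and returns both local functions on it. A test for list agreement is a randomized, possibly adaptive algorithm accepting every agreeing $2$-assignment with probability $1$ and rejecting every non-agreeing one with positive probability. *)

(* Defs.v *)
From Stdlib Require List.
From HB Require Import structures.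
From mathcomp Require Import all_boot all_order all_algebra.
Set Implicit Arguments. Unset Strict Implicit. Unset Printing Implicit Defensive.
Import Order.TTheory GRing.Theory Num.Theory.

Definition vertex (p d : nat) :=
  {U : {vspace 'rV['F_p]_(d.+2)} | (U != 0%VS) && (U != fullv)}.

Definition edge (p d : nat) :=
  {e : vertex p d * vertex p d |
     ((val e.1 <= val e.2)%VS) && (val e.1 != val e.2)}.

(* A local function on an edge e = {V1 < V2} into {0,1}, encoded as the pair
   (value at V1, value at V2). *)
Definition localfun := (bool * bool)%type.

(* The answer to a query of an edge: both local functions (L1^e, L2^e). *)
Definition answer := (localfun * localfun)%type.

Definition assignment (p d : nat) := edge p d -> answer.

Definition restr (p d : nat) (g : vertex p d -> bool) (e : edge p d) : localfun :=
  (g (val e).1, g (val e).2).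

(* Agreeing: there are g1, g2 and permutations pi_e of {1,2} with
   L^e_{pi_e(i)} = g_i|_e (pi_e = identity or the swap). *)
Definition agreeing (p d : nat) (L : assignment p d) : Prop :=
  exists g1 g2 : vertex p d -> bool, forall e : edge p d,
    L e = (restr g1 e, restr g2 e) \/ L e = (restr g2 e, restr g1 e).

(* Deterministic adaptive query algorithms = decision trees: either stop and
   output accept (true) / reject (false), or query an edge and continue
   depending on the answer. *)
Inductive dtree (E : Type) : Type :=
  | Leaf of bool
  | Query of E & (answer -> dtree E).

Fixpoint run (E : Type) (t : dtree E) (L : E -> answer) : bool :=
  match t with
  | Leaf b => b
  | Query e k => run (k (L e)) L
  end.

Fixpoint nqueries (E : Type) (t : dtree E) (L : E -> answer) : nat :=
  match t with
  | Leaf _ => 0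
  | Query e k => (nqueries (k (L e)) L).+1
  end.

(* A randomized (possibly adaptive) algorithm: a probability distribution with
   finite support over deterministic decision trees, given as a list of
   (probability, tree) pairs with positive probabilities summing to 1. *)
Definition is_distribution (R : realFieldType) (E : Type)
    (D : seq (R * dtree E)) : Prop :=
  (forall x, List.In x D -> 0 < x.1)%R /\ (\sum_(x <- D) x.1 = 1)%R.

Definition accept_prob (R : realFieldType) (E : Type)
    (D : seq (R * dtree E)) (L : E -> answer) : R :=
  (\sum_(x <- D | run x.2 L) x.1)%R.

Definition list_agreement_test (R : realFieldType) (p d : nat)
    (D : seq (R * dtree (edge p d))) : Prop :=
  is_distribution D /\
  (forall L : assignment p d, agreeing L -> accept_prob D L = 1%R) /\
  (forall L : assignment p d, ~ agreeing L -> (0 < 1 - accept_prob D L)%R).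

(* Main.v *)
Require Import Defs.
From Stdlib Require List Classical_Prop.
From mathcomp Require Import all_boot all_order all_algebra.
From mathcomp Require Import zify.
Set Implicit Arguments. Unset Strict Implicit. Unset Printing Implicit Defensive.
Import Order.TTheory GRing.Theory Num.Theory.

Fixpoint qlist (E : Type) (t : dtree E) (L : E -> answer) : seq E :=
  match t with
  | Leaf _ => [::]
  | Query e k => e :: qlist (k (L e)) L
  end.

Lemma size_qlist (E : Type) (t : dtree E) L : size (qlist t L) = nqueries t L.
Proof. by elim: t => //= e k IH; rewrite IH. Qed.

Lemma run_agree (E : eqType) (t : dtree E) (L L' : E -> answer) :
  (forall e, e \in qlist t L -> L' e = L e) -> run t L' = run t L.
Proof.
elim: t => //= e k IH H.
rewrite H ?mem_head //; apply: IH => e' He'; apply: H.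
by rewrite in_cons He' orbT.
Qed.

Lemma sum_pos_ge0 (R : realFieldType) (E : Type) (D : seq (R * dtree E)) (P : pred (R * dtree E)) :
  (forall x, List.In x D -> (0 < x.1)%R) -> (0 <= \sum_(x <- D | P x) x.1)%R.
Proof.
elim: D => [|y D IH] H; first by rewrite big_nil.
rewrite big_cons; case: (P y).
  apply: addr_ge0; first by apply: ltW; apply: H; left.
  by apply: IH => x Hx; apply: H; right.
by apply: IH => x Hx; apply: H; right.
Qed.

Lemma all_run_of_accept1 (R : realFieldType) (E : Type) (D : seq (R * dtree E)) L :
  is_distribution D -> accept_prob D L = 1%R -> forall x, List.In x D -> run x.2 L.
Proof.
move=> [Hpos Hsum] Hacc.
have H0 : (\sum_(x <- D | ~~ run x.2 L) x.1 = 0)%R.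
  rewrite (bigID (fun x => run x.2 L)) /= in Hsum.
  rewrite /accept_prob in Hacc; rewrite Hacc in Hsum.
  have := congr1 (fun z => z - 1)%R Hsum.
  by rewrite subrr addrC addrK.
elim: D Hpos H0 {Hsum Hacc} => [|y D IH] Hpos H0 x //= [Hx|Hx].
  subst x; apply/negPn/negP => Hn.
  move: H0; rewrite big_cons Hn => H0.
  have Hy : (0 < y.1)%R by apply: Hpos; left.
  have Hr : (0 <= \sum_(x <- D | ~~ run x.2 L) x.1)%R.
    by apply: sum_pos_ge0 => z Hz; apply: Hpos; right.
  have : (0 < y.1 + \sum_(x <- D | ~~ run x.2 L) x.1)%R by apply: ltr_wpDr.
  by rewrite H0 ltxx.
apply: IH => //; first by move=> z Hz; apply: Hpos; right.
move: H0; rewrite big_cons; case: ifP => // Hn H0.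
have Hy : (0 < y.1)%R by apply: Hpos; left.
have Hr : (0 <= \sum_(x <- D | ~~ run x.2 L) x.1)%R.
  by apply: sum_pos_ge0 => z Hz; apply: Hpos; right.
have : (0 < y.1 + \sum_(x <- D | ~~ run x.2 L) x.1)%R by apply: ltr_wpDr.
by rewrite H0 ltxx.
Qed.

Lemma exists_reject (R : realFieldType) (E : Type) (D : seq (R * dtree E)) L :
  is_distribution D -> (0 < 1 - accept_prob D L)%R ->
  exists x, List.In x D /\ run x.2 L = false.
Proof.
move=> [Hpos Hsum] Hlt.
suff : ~ (forall x, List.In x D -> run x.2 L).
  move=> Hn; apply: Classical_Prop.NNPP => Hne; apply: Hn => x Hx.
  by apply/negPn/negP => Hr; apply: Hne; exists x; split => //; apply/negbTE.
move=> Hall; move: Hlt.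
have -> : accept_prob D L = (\sum_(x <- D) x.1)%R.
  rewrite /accept_prob; elim: D Hall {Hpos Hsum} => [|y D IH] Hall; first by rewrite !big_nil.
  rewrite !big_cons Hall; last by left.
  by rewrite IH // => x Hx; apply: Hall; right.
by rewrite Hsum subrr ltxx.
Qed.

Definition nxt (n m : nat) := m.+1 %% n.

Lemma nxtE n m : m < n -> nxt n m = if m.+1 == n then 0 else m.+1.
Proof.
move=> Hm; rewrite /nxt; case: eqP => [->|ne]; first by rewrite modnn.
by rewrite modn_small //; lia.
Qed.

Lemma nxt_lt n m : m < n -> nxt n m < n.
Proof. by move=> Hm; rewrite nxtE //; case: eqP => H; lia. Qed.

Lemma nxt_neq n m : 2 <= n -> m < n -> m <> nxt n m.
Proof. by move=> H2 Hm; rewrite nxtE //; case: eqP => H; lia. Qed.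

Lemma nxt_nn n m m' : 3 <= n -> m < n -> m' < n -> m = nxt n m' -> m' = nxt n m -> False.
Proof. move=> H3 Hm Hm'; rewrite !nxtE //; case: eqP => H1; case: eqP => H2; lia. Qed.

Lemma nxt0 n : 3 <= n -> nxt n 0 = 1.
Proof. by move=> H; rewrite /nxt modn_small //; lia. Qed.

Lemma nxt_small n m : m.+1 < n -> nxt n m = m.+1.
Proof. by move=> H; rewrite /nxt modn_small. Qed.

Lemma nxt_last n : 0 < n -> nxt n n.-1 = 0.
Proof. by move=> H; rewrite /nxt prednK // modnn. Qed.

Lemma arc_eq n j k : k < n -> j < n -> 0 < k -> k != j ->
  (0 < k <= j) = (0 < nxt n k <= j).
Proof. move=> Hk Hj H0 Hkj; rewrite nxtE //; case: eqP => H; lia. Qed.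

Lemma lt0_3 n : 3 <= n -> 0 < n.
Proof. lia. Qed.

Definition Gedge (V : Type) (le ne : V -> V -> bool) :=
  {e : V * V | le e.1 e.2 && ne e.1 e.2}.

Definition Grestr (V : Type) (le ne : V -> V -> bool) (g : V -> bool) (e : Gedge le ne) : localfun :=
  (g (val e).1, g (val e).2).

Definition Gagreeing (V : Type) (le ne : V -> V -> bool) (L : Gedge le ne -> answer) : Prop :=
  exists g1 g2 : V -> bool, forall e : Gedge le ne,
    L e = (Grestr g1 e, Grestr g2 e) \/ L e = (Grestr g2 e, Grestr g1 e).

Definition Glat (R : realFieldType) (V : Type) (le ne : V -> V -> bool)
    (D : seq (R * dtree (Gedge le ne))) : Prop :=
  is_distribution D /\
  (forall L, Gagreeing L -> accept_prob D L = 1%R) /\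
  (forall L, ~ Gagreeing L -> (0 < 1 - accept_prob D L)%R).

Lemma edge_eq_ends (V : eqType) (le ne : V -> V -> bool) (e f : Gedge le ne) :
  (val e).1 = (val f).1 -> (val e).2 = (val f).2 -> e = f.
Proof.
move=> H1 H2; apply: val_inj.
by rewrite [val e]surjective_pairing [val f]surjective_pairing H1 H2.
Qed.

Lemma edge_no_flip (V : eqType) (le ne : V -> V -> bool)
  (Hne : forall a b, ne a b = (a != b)) (Hanti : forall a b, le a b -> le b a -> a = b)
  (e f : Gedge le ne) :
  (val e).1 = (val f).2 -> (val e).2 = (val f).1 -> False.
Proof.
move=> H1 H2.
have /andP[He1 He2] := valP e; have /andP[Hf1 _] := valP f.
move: He1 He2 Hf1; rewrite H1 H2 Hne => He1 He2 Hf1.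
by move/negP: He2; apply; apply/eqP; apply: Hanti.
Qed.

Definition is_cyc (V : Type) (le ne : V -> V -> bool) n (vv : nat -> V) (e : Gedge le ne) m :=
  ((val e).1 = vv m /\ (val e).2 = vv (nxt n m)) \/
  ((val e).1 = vv (nxt n m) /\ (val e).2 = vv m).

Definition inD (V : eqType) n (vv : nat -> V) (v : V) : bool :=
  [exists k : 'I_n, v == vv k].
Definition inArc (V : eqType) n (vv : nat -> V) (j : nat) (v : V) : bool :=
  [exists k : 'I_n, (0 < k <= j) && (v == vv k)].

Lemma generic (R : realFieldType) (V : eqType) (le ne : V -> V -> bool)
  (Hne : forall a b, ne a b = (a != b)) (Hanti : forall a b, le a b -> le b a -> a = b)
  (p n : nat) (vv : nat -> V) (D : seq (R * dtree (Gedge le ne))) :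
  3 <= n -> 2 * (p - 1) <= n ->
  (forall m m', m < n -> m' < n -> vv m = vv m' -> m = m') ->
  (forall m, m < n -> le (vv m) (vv (nxt n m)) || le (vv (nxt n m)) (vv m)) ->
  (forall (e : Gedge le ne) m m', m < n -> m' < n -> (val e).1 = vv m -> (val e).2 = vv m' ->
      m' = nxt n m \/ m = nxt n m') ->
  Glat D ->
  exists L : Gedge le ne -> answer, exists x, List.In x D /\ 2 * (p - 1) <= nqueries x.2 L.
Proof.
move=> Hn3 Hnp Hinj Hcomp Hind [Hdist [Hacc Hrej]].
have Hne' : forall m, m < n -> ne (vv m) (vv (nxt n m)).
  move=> m Hm; rewrite Hne; apply/negP => /eqP /Hinj.
  move=> /(_ Hm (nxt_lt Hm)); apply: nxt_neq => //; exact: ltnW.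
have [e0 _] : exists e0 : Gedge le ne, True.
  have H1 := Hcomp 0 (lt0_3 Hn3); have H2 := Hne' 0 (lt0_3 Hn3).
  case E : (le (vv 0) (vv (nxt n 0))).
    have Hp : le (vv 0) (vv (nxt n 0)) && ne (vv 0) (vv (nxt n 0)) by rewrite E H2.
    by exists (exist _ (vv 0, vv (nxt n 0)) Hp).
  rewrite E /= in H1.
  have Hp : le (vv (nxt n 0)) (vv 0) && ne (vv (nxt n 0)) (vv 0).
    by rewrite H1 Hne eq_sym -Hne H2.
  by exists (exist _ (vv (nxt n 0), vv 0) Hp).
pose c (m : nat) : Gedge le ne := insubd e0
  (if le (vv m) (vv (nxt n m)) then (vv m, vv (nxt n m)) else (vv (nxt n m), vv m)).
have Hc : forall m, m < n -> is_cyc n vv (c m) m.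
  move=> m Hm; rewrite /c /is_cyc val_insubd.
  have := Hcomp m Hm; have := Hne' m Hm.
  case E : (le (vv m) (vv (nxt n m))) => /= Hn' Hc'.
    by rewrite E Hn' /=; left.
  by rewrite Hc' Hne eq_sym -Hne Hn' /=; right.
clearbody c.
have HinD : forall m, m < n -> inD n vv (vv m).
  by move=> m Hm; apply/existsP; exists (Ordinal Hm).
have Hcinj : forall m m', m < n -> m' < n -> c m = c m' -> m = m'.
  move=> m m' Hm Hm' Heq.
  have [[A1 A2]|[A1 A2]] := Hc m Hm; have [[B1 B2]|[B1 B2]] := Hc m' Hm'.
  - by apply: Hinj => //; rewrite -A1 -B1 Heq.
  - exfalso; apply: (nxt_nn Hn3 Hm Hm'); apply: Hinj => //; try by apply: nxt_lt.
      by rewrite -A1 -B1 Heq.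
    by rewrite -A2 -B2 Heq.
  - exfalso; apply: (nxt_nn Hn3 Hm Hm'); apply: Hinj => //; try by apply: nxt_lt.
      by rewrite -A2 -B2 Heq.
    by rewrite -A1 -B1 Heq.
  - by apply: Hinj => //; rewrite -A2 -B2 Heq.
have HbothD : forall e : Gedge le ne, inD n vv (val e).1 -> inD n vv (val e).2 ->
    exists2 k, k < n & e = c k.
  move=> e /existsP[[m Hm] /eqP E1] /existsP[[m' Hm'] /eqP E2]; rewrite /= in E1 E2.
  have [Em|Em] := Hind e m m' Hm Hm' E1 E2.
    exists m => //.
    have [[A1 A2]|[A1 A2]] := Hc m Hm.
      by apply: edge_eq_ends => /=; rewrite ?A1 ?A2 ?E1 ?E2 ?Em.
    by exfalso; apply: (edge_no_flip Hne Hanti (e := e) (f := c m)); rewrite ?A1 ?A2 ?E1 ?E2 ?Em.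
  exists m' => //.
  have [[A1 A2]|[A1 A2]] := Hc m' Hm'.
    by exfalso; apply: (edge_no_flip Hne Hanti (e := e) (f := c m')); rewrite ?A1 ?A2 ?E1 ?E2 ?Em.
  by apply: edge_eq_ends => /=; rewrite ?A1 ?A2 ?E1 ?E2 ?Em.
pose L0 : Gedge le ne -> answer := fun e =>
  if e == c 0 then ((true, false), (false, true))
  else (Grestr (inD n vv) e, Grestr (fun _ => false) e).
have Hn0 := lt0_3 Hn3.
have Hnag : ~ Gagreeing L0.
  move=> [h1 [h2 H]].
  have Hstep : forall m, 0 < m < n -> h1 (vv m) = h1 (vv (nxt n m)).
    move=> m /andP[m0 mn]; have := H (c m); rewrite /L0.
    have -> : (c m == c 0) = false.
      by apply/eqP => /(Hcinj _ _ mn Hn0) E; rewrite E in m0.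
    rewrite /Grestr.
    have Hnm := nxt_lt mn.
    have [[A1 A2]|[A1 A2]] := Hc m mn; rewrite A1 A2 !HinD //;
      by case=> [[<- <- _ _]|[_ _ <- <-]].
  have H0 : h1 (vv 0) != h1 (vv (nxt n 0)).
    have := H (c 0); rewrite /L0 eqxx /Grestr.
    have [[A1 A2]|[A1 A2]] := Hc 0 Hn0; rewrite A1 A2;
      by case=> [[<- <- _ _]|[_ _ <- <-]].
  have Hch : forall k, 0 < k < n -> h1 (vv k) = h1 (vv 1).
    elim=> [|k IH] // /andP[_ Hk].
    case: (posnP k) => [->|k0] //.
    rewrite -IH ?k0 ?(ltnW Hk) // (Hstep k) ?k0 ?(ltnW Hk) // nxt_small //.
  have Hn1 : 0 < n.-1 < n by apply/andP; split; lia.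
  have E := Hstep n.-1 Hn1; rewrite nxt_last // in E.
  have E2 := Hch n.-1 Hn1.
  by move: H0; rewrite nxt0 // -E E2 eqxx.
have HarcD : forall j v, inArc n vv j v -> inD n vv v.
  by move=> j v /existsP[k /andP[_ E]]; apply/existsP; exists k.
have HarcE : forall j m, m < n -> inArc n vv j (vv m) = (0 < m <= j).
  move=> j m Hm; apply/existsP/idP => [[k /andP[Hk /eqP E]]|H].
    by rewrite (Hinj _ _ Hm (ltn_ord k) E).
  by exists (Ordinal Hm); rewrite H eqxx.
have Hex : forall j, j < n -> exists L', Gagreeing L' /\ forall e, e != c j -> L' e = L0 e.
  move=> j Hj; case: (posnP j) => [->|j0].
    exists (fun e => (Grestr (inD n vv) e, Grestr (fun _ => false) e)); split.
      by exists (inD n vv), (fun _ => false) => e; left.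
    by move=> e /negbTE He; rewrite /L0 He.
  pose a := inArc n vv j.
  exists (fun e => if e == c j then (Grestr (fun v => inD n vv v (+) a v) e, Grestr a e) else L0 e).
  split; last by move=> e /negbTE ->.
  exists (fun v => inD n vv v (+) a v), a => e.
  case: ifP => [_|Hej]; first by left.
  rewrite /L0; case: ifP => He0.
    move/eqP: He0 => ->.
    have Ha0 : a (vv 0) = false by rewrite /a HarcE.
    have Ha1 : a (vv 1) = true by rewrite /a HarcE ?j0 //; lia.
    rewrite /Grestr.
    have [[A1 A2]|[A1 A2]] := Hc 0 Hn0; rewrite A1 A2 nxt0 // Ha0 Ha1 !HinD //; try lia.
      by left.
    by right.
  case HD : (inD n vv (val e).1 && inD n vv (val e).2).
    case/andP: HD => HD1 HD2.
    have [k Hk Ek] := HbothD e HD1 HD2.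
    rewrite Ek in Hej He0 *.
    have Hk0 : 0 < k by rewrite lt0n; apply/eqP => E; rewrite E eqxx in He0.
    have Hkj : k != j by apply/eqP => E; rewrite E eqxx in Hej.
    have Hnk := nxt_lt Hk.
    rewrite /Grestr /a.
    have [[A1 A2]|[A1 A2]] := Hc k Hk; rewrite A1 A2 !HinD // !HarcE // -(arc_eq Hk Hj Hk0 Hkj);
      by case: (0 < k <= j); [right|left].
  have H1 := HarcD j (val e).1; have H2 := HarcD j (val e).2.
  move: H1 H2 HD; rewrite /Grestr -/a.
  case: (a (val e).1); case: (a (val e).2); case: (inD n vv (val e).1);
    case: (inD n vv (val e).2) => //= H1 H2 HD;
    (try by left); (try by right); (try by have := H1 isT); by have := H2 isT.
have [x [HxD Hrun]] := exists_reject Hdist (Hrej L0 Hnag).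
exists L0, x; split => //.
rewrite leqNgt; apply/negP => Hlt.
have [j Hj] : exists j : 'I_n, c j \notin qlist x.2 L0.
  case: (boolP [exists j : 'I_n, c j \notin qlist x.2 L0]) => [/existsP //|].
  rewrite negb_exists => /forallP Hall; exfalso.
  have : n <= size (qlist x.2 L0).
    have -> : n = size (map (fun j : 'I_n => c j) (enum 'I_n)) by rewrite size_map size_enum_ord.
    apply: uniq_leq_size.
      rewrite map_inj_uniq ?enum_uniq // => i i' /(Hcinj _ _ (ltn_ord i) (ltn_ord i')) H.
      exact: val_inj.
    by move=> e /mapP [i _ ->]; have := Hall i; rewrite negbK.
  rewrite size_qlist => H.
  by have := leq_ltn_trans H (leq_trans Hlt Hnp); rewrite ltnn.
have [L' [Hag HL']] := Hex j (ltn_ord j).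
have := all_run_of_accept1 Hdist (Hacc L' Hag) HxD.
rewrite (run_agree (L := L0)) ?Hrun // => e He; apply: HL'.
by apply/negP => /eqP E; move: Hj; rewrite -E He.
Qed.

Local Open Scope ring_scope.

Definition vecF (p d' : nat) (x y z : 'F_p) : 'rV['F_p]_(d'.+3) :=
  \row_(k < d'.+3) (if val k == 0%N then x else if val k == 1%N then y
                    else if val k == 2%N then z else 0).

Definition i0 d' : 'I_(d'.+3) := Ordinal (isT : (0 < d'.+3)%N).
Definition i1 d' : 'I_(d'.+3) := Ordinal (isT : (1 < d'.+3)%N).
Definition i2 d' : 'I_(d'.+3) := Ordinal (isT : (2 < d'.+3)%N).

Lemma vec_lin p d' (a b x y z x' y' z' : 'F_p) :
  a *: vecF d' x y z + b *: vecF d' x' y' z' =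
  vecF d' (a * x + b * x') (a * y + b * y') (a * z + b * z').
Proof.
apply/rowP => k; rewrite !mxE.
by case: ifP => _; [|case: ifP => _; [|case: ifP => _]]; rewrite // !mulr0 addr0.
Qed.

Lemma vec_inj p d' (x y z x' y' z' : 'F_p) :
  vecF d' x y z = vecF d' x' y' z' -> [/\ x = x', y = y' & z = z'].
Proof.
move=> E.
have E0 := congr1 (fun v : 'rV_(d'.+3) => v 0 (i0 d')) E.
have E1 := congr1 (fun v : 'rV_(d'.+3) => v 0 (i1 d')) E.
have E2 := congr1 (fun v : 'rV_(d'.+3) => v 0 (i2 d')) E.
by move: E0 E1 E2; rewrite /= !mxE /=.
Qed.

Lemma in_plane p d' (w u v : 'rV['F_p]_(d'.+3)) :
  w \in (<[u]> + <[v]>)%VS -> exists a b, w = a *: u + b *: v.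
Proof.
case/memv_addP => u' /vlineP [a ->] [v' /vlineP [b ->] ->].
by exists a, b.
Qed.

Definition Av p d' (x : 'F_p) := vecF d' 1 0 x.
Definition Bv p d' (x : 'F_p) := vecF d' 0 1 x.
Definition Cv p d' := vecF d' (0 : 'F_p) 0 1.
Definition Lp p d' (s t : 'F_p) := (<[Av d' s]> + <[Bv d' t]>)%VS.

Lemma M1 p d' (x y : 'F_p) : Av d' x \in <[Av d' y]>%VS -> x = y.
Proof.
case/vlineP => k; rewrite /Av -[k *: _]addr0 -[X in _ + X](scale0r (vecF d' 0 0 0)).
rewrite vec_lin; case/vec_inj; rewrite !mulr1 !mulr0 !addr0 => <- _.
by rewrite mul1r.
Qed.

Lemma in_lineF p d' (x y z x' y' z' : 'F_p) :
  vecF d' x y z \in <[vecF d' x' y' z']>%VS -> exists k, [/\ x = k * x', y = k * y' & z = k * z'].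
Proof.
case/vlineP => k E; exists k.
move: E; rewrite -[k *: _]addr0 -[X in _ + X](scale0r (vecF d' 0 0 0)) vec_lin.
by case/vec_inj; rewrite !mulr0 !addr0.
Qed.

Lemma in_planeF p d' (x y z : 'F_p) s t :
  vecF d' x y z \in Lp d' s t -> exists a b, [/\ x = a, y = b & z = a * s + b * t].
Proof.
case/in_plane => a [b]; rewrite /Av /Bv vec_lin; case/vec_inj => -> -> ->.
by exists a, b; rewrite !mulr1 !mulr0 addr0 add0r.
Qed.

Lemma M2 p d' (x y : 'F_p) : Av d' x \notin <[Bv d' y]>%VS.
Proof. by apply/negP => /in_lineF [k [E _ _]]; move: E; rewrite mulr0 => /eqP; rewrite oner_eq0. Qed.

Lemma M3 p d' (x y : 'F_p) : Bv d' x \notin <[Av d' y]>%VS.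
Proof. by apply/negP => /in_lineF [k [_ E _]]; move: E; rewrite mulr0 => /eqP; rewrite oner_eq0. Qed.

Lemma M4 p d' (x y : 'F_p) : Bv d' x \in <[Bv d' y]>%VS -> x = y.
Proof. by case/in_lineF => k [_ E ->]; move: E; rewrite mulr1 => <-; rewrite mul1r. Qed.

Lemma M5 p d' (x s t : 'F_p) : Av d' x \in Lp d' s t -> x = s.
Proof. by case/in_planeF => a [b [<- <- ->]]; rewrite mul1r mul0r addr0. Qed.

Lemma M6 p d' (x s t : 'F_p) : Bv d' x \in Lp d' s t -> x = t.
Proof. by case/in_planeF => a [b [<- <- ->]]; rewrite mul1r mul0r add0r. Qed.

Lemma M7a p d' (s t : 'F_p) : Av d' s \in Lp d' s t.
Proof. by rewrite memvE addvSl. Qed.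

Lemma M7b p d' (s t : 'F_p) : Bv d' t \in Lp d' s t.
Proof. by rewrite memvE addvSr. Qed.

Lemma M8 p d' (s t : 'F_p) : Cv p d' \notin Lp d' s t.
Proof.
apply/negP => /in_planeF [a [b [Ea Eb E]]].
by move: E; rewrite -Ea -Eb !mul0r addr0 => /eqP; rewrite oner_eq0.
Qed.

Lemma Av_nz p d' (x : 'F_p) : Av d' x != 0.
Proof.
apply/negP => /eqP E; have := congr1 (fun v : 'rV_(d'.+3) => v 0 (i0 d')) E.
by rewrite /= !mxE /= => /eqP; rewrite oner_eq0.
Qed.

Lemma Bv_nz p d' (x : 'F_p) : Bv d' x != 0.
Proof.
apply/negP => /eqP E; have := congr1 (fun v : 'rV_(d'.+3) => v 0 (i1 d')) E.
by rewrite /= !mxE /= => /eqP; rewrite oner_eq0.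
Qed.

Lemma nz_full p d' (U : {vspace 'rV['F_p]_(d'.+3)}) w w' :
  w \in U -> w != 0 -> w' \notin U -> (U != 0%VS) && (U != fullv).
Proof.
move=> Hw Hnz Hw'; apply/andP; split; apply/eqP => E.
  by move: Hw; rewrite E memv0 (negbTE Hnz).
by move: Hw'; rewrite E memvf.
Qed.

Definition pa p d' (x : 'F_p) : vertex p d'.+1 :=
  exist _ <[Av d' x]>%VS (nz_full (memv_line _) (@Av_nz p d' x) (@M3 p d' 0 x)).
Definition pb p d' (x : 'F_p) : vertex p d'.+1 :=
  exist _ <[Bv d' x]>%VS (nz_full (memv_line _) (@Bv_nz p d' x) (@M2 p d' 0 x)).
Definition pl p d' (s t : 'F_p) : vertex p d'.+1 :=
  exist _ (Lp d' s t) (nz_full (@M7a p d' s t) (@Av_nz p d' s) (@M8 p d' s t)).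

Lemma leAA p d' (x y : 'F_p) : (<[Av d' x]> <= <[Av d' y]>)%VS -> x = y.
Proof. by rewrite -memvE => /M1. Qed.
Lemma leBB p d' (x y : 'F_p) : (<[Bv d' x]> <= <[Bv d' y]>)%VS -> x = y.
Proof. by rewrite -memvE => /M4. Qed.
Lemma leAB p d' (x y : 'F_p) : (<[Av d' x]> <= <[Bv d' y]>)%VS = false.
Proof. by rewrite -memvE (negbTE (@M2 p d' x y)). Qed.
Lemma leBA p d' (x y : 'F_p) : (<[Bv d' x]> <= <[Av d' y]>)%VS = false.
Proof. by rewrite -memvE (negbTE (@M3 p d' x y)). Qed.
Lemma leAL p d' (x s t : 'F_p) : (<[Av d' x]> <= Lp d' s t)%VS -> x = s.
Proof. by rewrite -memvE => /M5. Qed.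
Lemma leBL p d' (x s t : 'F_p) : (<[Bv d' x]> <= Lp d' s t)%VS -> x = t.
Proof. by rewrite -memvE => /M6. Qed.
Lemma leLA p d' (x s t : 'F_p) : (Lp d' s t <= <[Av d' x]>)%VS = false.
Proof. by apply/negP => /subvP /(_ _ (@M7b p d' s t)); rewrite (negbTE (@M3 p d' t x)). Qed.
Lemma leLB p d' (x s t : 'F_p) : (Lp d' s t <= <[Bv d' x]>)%VS = false.
Proof. by apply/negP => /subvP /(_ _ (@M7a p d' s t)); rewrite (negbTE (@M2 p d' s x)). Qed.
Lemma leLL p d' (s t s' t' : 'F_p) : (Lp d' s t <= Lp d' s' t')%VS -> s = s' /\ t = t'.
Proof.
move/subvP => H; split; [exact: M5 (H _ (@M7a p d' s t)) | exact: M6 (H _ (@M7b p d' s t))].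
Qed.

Lemma Fp_eq p (hp : prime p) i j : (i%:R : 'F_p) = j%:R -> (i %% p = j %% p)%N.
Proof. by move=> E; rewrite -!(val_Fp_nat hp) E. Qed.

Lemma Fp_inj p (hp : prime p) i j : (i < p)%N -> (j < p)%N -> (i%:R : 'F_p) = j%:R -> i = j.
Proof. by move=> Hi Hj /(Fp_eq hp); rewrite !modn_small. Qed.

Definition kind p d' (i r : nat) : vertex p d'.+1 :=
  if r == 0%N then pa d' i%:R else if r == 1%N then pl d' i%:R i%:R
  else if r == 2%N then pb d' i%:R else pl d' i.+1%:R i%:R.

Lemma kind_le p d' (hp : prime p) i r i' r' :
  (i < p)%N -> (i' < p)%N -> (r < 4)%N -> (r' < 4)%N ->
  (val (kind p d' i r) <= val (kind p d' i' r'))%VS -> val (kind p d' i r) != val (kind p d' i' r') ->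
  [\/ [/\ r = 0%N, r' = 1%N & i = i'], [/\ r = 0%N, r' = 3%N & i = (i'.+1 %% p)%N],
      [/\ r = 2%N, r' = 1%N & i = i'] | [/\ r = 2%N, r' = 3%N & i = i']].
Proof.
move=> Hi Hi'; case: r => [|[|[|[|r]]]] // _; case: r' => [|[|[|[|r']]]] // _;
  rewrite /kind /=.
all: try by rewrite ?leAB ?leBA ?leLA ?leLB.
all: try by move/leAA => ->; rewrite eqxx.
all: try by move/leBB => ->; rewrite eqxx.
all: try by move/leLL => [-> ->]; rewrite eqxx.
all: try by move/leLL => [/(Fp_inj hp Hi Hi') -> _]; rewrite eqxx.
- by move/leAL/(Fp_inj hp Hi Hi') => -> _; apply: Or41.
- by move/leAL/(Fp_eq hp); rewrite (modn_small Hi) => -> _; apply: Or42.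
- by move/leBL/(Fp_inj hp Hi Hi') => -> _; apply: Or43.
- by move/leBL/(Fp_inj hp Hi Hi') => -> _; apply: Or44.
Qed.

Lemma modS_neq p i : (1 < p)%N -> (i < p)%N -> (i.+1 %% p)%N <> i.
Proof.
move=> H1 Hi E; have := @nxt_neq p i (H1) Hi; rewrite /nxt E; by [].
Qed.

Lemma kind_eq p d' (hp : prime p) i r i' r' :
  (i < p)%N -> (i' < p)%N -> (r < 4)%N -> (r' < 4)%N ->
  kind p d' i r = kind p d' i' r' -> i = i' /\ r = r'.
Proof.
move=> Hi Hi' Hr Hr' /(congr1 val) E.
have H1 : (val (kind p d' i r) <= val (kind p d' i' r'))%VS by rewrite E subvv.
have H2 : (val (kind p d' i' r') <= val (kind p d' i r))%VS by rewrite E subvv.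
have Hp1 := prime_gt1 hp.
move: H1 H2 {E}; case: r Hr => [|[|[|[|r]]]] // _; case: r' Hr' => [|[|[|[|r']]]] // _;
  rewrite /kind /=.
all: try by rewrite ?leAB ?leBA ?leLA ?leLB.
all: try by move/leAA/(Fp_inj hp Hi Hi') => ->.
all: try by move/leBB/(Fp_inj hp Hi Hi') => ->.
all: try by move/leLL => [/(Fp_inj hp Hi Hi') -> _].
all: try by move/leLL => [_ /(Fp_inj hp Hi Hi') ->].
- move/leLL => [/(Fp_eq hp) E1 /(Fp_inj hp Hi Hi') E2] _; exfalso.
  by rewrite E2 (modn_small Hi') in E1; apply: (modS_neq Hp1 Hi'); exact: (esym E1).
- move=> _ /leLL [/(Fp_eq hp) E1 /(Fp_inj hp Hi' Hi) E2]; exfalso.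
  by rewrite E2 (modn_small Hi) in E1; apply: (modS_neq Hp1 Hi); exact: (esym E1).
Qed.

Local Close Scope ring_scope.

Definition vvG p d' (m : nat) : vertex p d'.+1 := kind p d' (m %/ 4) (m %% 4).

Lemma decomp p m : m < 4 * p -> exists i r, [/\ m = i * 4 + r, i < p & r < 4].
Proof.
move=> Hm; exists (m %/ 4), (m %% 4); split; first exact: divn_eq.
  by rewrite ltn_divLR // mulnC.
exact: ltn_pmod.
Qed.

Lemma vv_kind p d' i r : r < 4 -> vvG p d' (i * 4 + r) = kind p d' i r.
Proof. by move=> Hr; rewrite /vvG divnMDl // modnMDl divn_small // modn_small // addn0. Qed.

Lemma ar1 p i r : i < p -> r < 3 -> nxt (4 * p) (i * 4 + r) = i * 4 + r.+1.
Proof. by move=> Hi Hr; rewrite nxt_small; [rewrite addnS | lia]. Qed.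

Lemma ar2 p i : i < p -> nxt (4 * p) (i * 4 + 3) = if i.+1 == p then 0 else i.+1 * 4 + 0.
Proof. move=> Hi; rewrite nxtE; last lia. by case: eqP => H; case: eqP => H'; lia. Qed.

Lemma ar3 p i i' : i' < p -> i = i'.+1 %% p -> i * 4 + 0 = nxt (4 * p) (i' * 4 + 3).
Proof.
move=> Hi' E; rewrite ar2 //; have := nxtE Hi'; rewrite /nxt -E => ->.
by case: eqP.
Qed.

Lemma geo_inj p d' (hp : prime p) m m' : m < 4 * p -> m' < 4 * p ->
  vvG p d' m = vvG p d' m' -> m = m'.
Proof.
move=> Hm Hm'; have [i [r [-> Hi Hr]]] := decomp Hm; have [i' [r' [-> Hi' Hr']]] := decomp Hm'.
by rewrite !vv_kind // => /(kind_eq hp Hi Hi' Hr Hr') [-> ->].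
Qed.

Lemma geo_comp p d' (hp : prime p) m : m < 4 * p ->
  (val (vvG p d' m) <= val (vvG p d' (nxt (4 * p) m)))%VS ||
  (val (vvG p d' (nxt (4 * p) m)) <= val (vvG p d' m))%VS.
Proof.
move=> Hm; have [i [r [-> Hi Hr]]] := decomp Hm.
case: r Hr => [|[|[|[|r]]]] // _.
- by rewrite ar1 // !vv_kind // /kind /= -memvE M7a.
- by rewrite ar1 // !vv_kind // /kind /= -memvE M7b orbT.
- by rewrite ar1 // !vv_kind // /kind /= -memvE M7b.
- rewrite ar2 //; case: eqP => E.
    rewrite -[0]/(0 * 4 + 0) !vv_kind // /kind /=.
    have -> : (0%:R : 'F_p)%R = (i.+1%:R)%R by rewrite E -(Fp_nat_mod hp p) modnn.
    by rewrite -memvE M7a orbT.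
  by rewrite !vv_kind // /kind /= -memvE M7a orbT.
Qed.

Lemma geo_ind p d' (hp : prime p) (e : edge p d'.+1) m m' : m < 4 * p -> m' < 4 * p ->
  (val e).1 = vvG p d' m -> (val e).2 = vvG p d' m' ->
  m' = nxt (4 * p) m \/ m = nxt (4 * p) m'.
Proof.
move=> Hm Hm' E1 E2; have /andP[Hle Hne] := valP e; move: Hle Hne; rewrite E1 E2.
have [i [r [-> Hi Hr]]] := decomp Hm; have [i' [r' [-> Hi' Hr']]] := decomp Hm'.
rewrite !vv_kind // => Hle Hne.
case: (kind_le hp Hi Hi' Hr Hr' Hle Hne) => [[-> -> ->]|[-> -> E]|[-> -> ->]|[-> -> ->]].
- by left; rewrite ar1.
- by right; apply: ar3.
- by right; rewrite ar1.
- by left; rewrite ar1.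
Qed.

Theorem mainTheorem11 (R : realFieldType) (p d : nat) (hp : prime p) (hd : 1 <= d)
    (D : seq (R * dtree (edge p d))) :
  list_agreement_test D ->
  exists L : assignment p d, exists x, List.In x D /\ 2 * (p - 1) <= nqueries x.2 L.
Proof.
case: d hd D => [|d'] // _ D Hlat.
pose le := fun u v : vertex p d'.+1 => (val u <= val v)%VS.
pose ne := fun u v : vertex p d'.+1 => val u != val v.
have Hne : forall a b, ne a b = (a != b) by [].
have Hanti : forall a b, le a b -> le b a -> a = b.
  by move=> a b H1 H2; apply: val_inj; apply/eqP; rewrite eqEsubv; apply/andP; split; [exact: H1|exact: H2].
have Hp1 := prime_gt1 hp.
have H3 : 3 <= 4 * p by lia.
have Hnp : 2 * (p - 1) <= 4 * p by lia.
exact: (@generic R (vertex p d'.+1) le ne Hne Hanti p (4 * p) (vvG p d') D H3 Hnp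
  (@geo_inj p d' hp) (@geo_comp p d' hp) (@geo_ind p d' hp) Hlat).
Qed.
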